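(* Let $P$ be a finite sequence of nonnegative integers. The following are equivalent: (i) $P$ is loop graphic; (ii) the pair $(P,P)$ is bigraphic; (iii) $P$ is mirror bigraphic.
   Context: An $l$-graph is a graph without multiple edges and with at most one loop attached at each vertex; the degree of a vertex is the number of edges incident with it, a loop contributing exactly one to the degree. A sequence $P$ is loop graphic if there is an $l$-graph whose vertex degrees are exactly the elements of $P$. For sequences $P,Q$ of nonnegative integers, the pair $(P,Q)$ is bigraphic if there is a bipartite graph $G=(V_1\cup V_2,E)$ (with stable sets $V_1,V_2$) whose vertices in $V_1$ have degrees equal to the elements of $P$ and whose vertices in $V_2$ have degrees equal to the elements of $Q$; such $G$ realizes $(P,Q)$. A bipartite graph $G=(V_1\cup V_2,E)$ is mirror if there is a bijection $\varphi:V_1\to V_2$ with $u\varphi(v)\in E \iff \varphi(u)v\in E$ for all $u,v\in V_1$. A sequence $P$ is mirror bigraphic if $(P,P)$ is bigraphic and some mirror bipartite graph realizes $(P,P)$. *)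

(* Defs.v *)
From mathcomp Require Import all_boot.
Set Implicit Arguments. Unset Strict Implicit. Unset Printing Implicit Defensive.

(* An l-graph on a finite vertex type T: a symmetric relation e, where
   e x x means there is a (single) loop at x.  No multiple edges. *)
Definition lgraph (T : finType) (e : rel T) : Prop := symmetric e.

(* Degree in an l-graph: number of vertices adjacent to x; a loop (x adjacent
   to itself) contributes exactly one. *)
Definition ldeg (T : finType) (e : rel T) (x : T) : nat := #|[set y | e x y]|.

Definition loop_graphic (P : seq nat) : Prop :=
  exists e : rel 'I_(size P), lgraph e /\ forall i, ldeg e i = nth 0 P i.

Definition deg1 (T1 T2 : finType) (b : T1 -> T2 -> bool) (u : T1) : nat :=
  #|[set v | b u v]|.
Definition deg2 (T1 T2 : finType) (b : T1 -> T2 -> bool) (v : T2) : nat :=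
  #|[set u | b u v]|.

Definition realizes (P Q : seq nat) (b : 'I_(size P) -> 'I_(size Q) -> bool)
  : Prop :=
  (forall u, deg1 b u = nth 0 P u) /\ (forall v, deg2 b v = nth 0 Q v).

Definition bigraphic (P Q : seq nat) : Prop :=
  exists b : 'I_(size P) -> 'I_(size Q) -> bool, realizes b.

Definition mirror (T1 T2 : finType) (b : T1 -> T2 -> bool) : Prop :=
  exists phi : T1 -> T2, bijective phi /\ forall u v, b u (phi v) = b v (phi u).

Definition mirror_bigraphic (P : seq nat) : Prop :=
  bigraphic P P /\
  exists b : 'I_(size P) -> 'I_(size P) -> bool, realizes b /\ mirror b.

(* Main.v *)
Require Import Defs.
From mathcomp Require Import all_boot.
Set Implicit Arguments. Unset Strict Implicit.

Definition RR (T : finType) (A : {set T}) (P : T -> nat) (M : rel T) : Prop :=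
  (forall u, u \in A -> #|[set v in A | M u v]| = P u) /\
  (forall u, u \in A -> #|[set v in A | M v u]| = P u).

Definition trr (T : finType) (M : rel T) : rel T := fun a b => M b a.

Definition asym (T : finType) (A : {set T}) (M : rel T) (x : T) :=
  [set w in A | M x w != M w x].

Lemma RR_tr (T : finType) A P (M : rel T) : RR A P M -> RR A P (trr M).
Proof. by case=> h1 h2; split. Qed.

Lemma asym_tr (T : finType) A (M : rel T) x : asym A (trr M) x = asym A M x.
Proof. by apply/setP=> w; rewrite !inE /trr eq_sym. Qed.

Lemma swap_card (T : finType) (A : {set T}) (f g : pred T) a b :
  a \in A -> b \in A -> a != b -> f a -> ~~ f b -> g b -> ~~ g a ->
  (forall z, z != a -> z != b -> g z = f z) ->
  #|[set z in A | f z]| = #|[set z in A | g z]|.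
Proof.
move=> aA bA ab fa fb gb ga h.
have E : [set z in A | g z] = b |: ([set z in A | f z] :\ a).
  apply/setP=> z; rewrite !inE.
  case: (eqVneq z b) => [->|nb]; first by rewrite gb bA.
  case: (eqVneq z a) => [Ea|na]; first by subst z; rewrite (negbTE ga) andbF.
  by rewrite h.
rewrite E cardsU1 !inE (negbTE fb) andbF /=.
rewrite (cardsD1 a [set z in A | f z]) !inE aA fa /=.
by rewrite eq_sym ab.
Qed.

Lemma card_split (T : finType) (A : {set T}) (f : pred T) x : x \in A ->
  #|[set v in A | f v]| = f x + #|[set v in A :\ x | f v]|.
Proof.
move=> xA; rewrite (cardsD1 x [set v in A | f v]) !inE xA /=.
congr (_ + _); apply: eq_card => v; rewrite !inE; by case: (v == x).
Qed.

Lemma core (T : finType) (A : {set T}) P (M : rel T) x u v :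
  RR A P M -> x \in A -> u \in A -> v \in A ->
  M x v -> ~~ M v x -> M u x -> ~~ M x u -> P v <= P u ->
  exists M', RR A P M' /\ asym A M' x \proper asym A M x.
Proof.
move=> [Hr Hc] xA uA vA xv vx ux xu Pvu.
have ux' : u != x by apply/eqP=> E; move: ux xu; rewrite E => ->.
have vx' : v != x by apply/eqP=> E; move: xv vx; rewrite E => ->.
have uv : u != v by apply/eqP=> E; move: ux vx; rewrite E => ->.
have [y yA [yu yv]] : exists2 y, y \in A & (M y u /\ ~~ M y v).
  have : ~~ ([set w in A | M w u] \subset [set w in A | M w v]).
    apply/negP=> S.
    have Pr : [set w in A | M w u] \proper [set w in A | M w v].
      rewrite properE S /=; apply/subsetPn; exists x; by rewrite !inE ?xA ?xv ?xu.
    move: (proper_card Pr); rewrite Hc // Hc //.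
    by rewrite ltnNge Pvu.
  case/subsetPn=> y; rewrite !inE => /andP [yA yu] /negP yv.
  exists y => //; split => //; apply/negP => h; apply: yv; by rewrite yA.
have yx : y != x by apply/eqP=> E; move: yu xu; rewrite E => ->.
pose M' : rel T := fun a b =>
  if (a == x) && (b == u) then true else
  if (a == x) && (b == v) then false else
  if (a == y) && (b == u) then false else
  if (a == y) && (b == v) then true else M a b.
have E1 : (u == v) = false by apply/negbTE.
have E2 : (v == u) = false by rewrite eq_sym; apply/negbTE.
have E3 : (u == x) = false by apply/negbTE.
have E4 : (x == u) = false by rewrite eq_sym; apply/negbTE.
have E5 : (v == x) = false by apply/negbTE.
have E6 : (x == v) = false by rewrite eq_sym; apply/negbTE.
have E7 : (y == x) = false by apply/negbTE.
have E8 : (x == y) = false by rewrite eq_sym; apply/negbTE.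
exists M'; split; first split.
- move=> w wA; rewrite -Hr //.
  case: (eqVneq w x) => [->|wx].
    symmetry; apply: (swap_card (a:=v) (b:=u)) => //; first by rewrite eq_sym.
    + by rewrite /M' !eqxx ?E1 ?E2 /=.
    + by rewrite /M' !eqxx ?E1 ?E2 /=.
    by move=> z zv zu; rewrite /M' eqxx (negbTE zv) (negbTE zu) E8 /=.
  case: (eqVneq w y) => [->|wy].
    symmetry; apply: (swap_card (a:=u) (b:=v)) => //.
    + by rewrite /M' !eqxx ?E7 ?E1 ?E2 /=.
    + by rewrite /M' !eqxx ?E7 ?E1 ?E2 /=.
    by move=> z zu zv; rewrite /M' E7 /= eqxx (negbTE zu) (negbTE zv).
  apply: eq_card => z; rewrite !inE /M' (negbTE wx) (negbTE wy) //.
- move=> w wA; rewrite -Hc //.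
  case: (eqVneq w u) => [->|wu].
    symmetry; apply: (swap_card (a:=y) (b:=x)) => //.
    + by rewrite /M' !eqxx ?E7 /=.
    + by rewrite /M' !eqxx ?E7 /=.
    by move=> z zy zx; rewrite /M' (negbTE zy) (negbTE zx).
  case: (eqVneq w v) => [->|wv].
    symmetry; apply: (swap_card (a:=x) (b:=y)) => //; first by rewrite eq_sym.
    + by rewrite /M' !eqxx ?E7 ?E2 /=.
    + by rewrite /M' !eqxx ?E7 ?E2 /=.
    by move=> z zx zy; rewrite /M' (negbTE zy) (negbTE zx).
  apply: eq_card => z; rewrite !inE /M' (negbTE wu) (negbTE wv) !andbF //.
- have Ewx : forall w, M' w x = M w x.
    by move=> w; rewrite /M' E4 E6 !andbF.
  have Exw : forall w, w != u -> w != v -> M' x w = M x w.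
    by move=> w wu wv; rewrite /M' eqxx (negbTE wu) (negbTE wv) E8.
  rewrite properE; apply/andP; split.
    apply/subsetP=> w; rewrite !inE Ewx => /andP [wA].
    case: (eqVneq w u) => [->|wu]; first by rewrite /M' !eqxx /= ux.
    case: (eqVneq w v) => [->|wv].
      by rewrite /M' !eqxx E2 /= (negbTE vx).
    by rewrite Exw // wA.
  apply/subsetPn; exists u; first by rewrite !inE uA ux (negbTE xu).
  by rewrite /asym !inE Ewx /M' !eqxx /= ux andbF.
Qed.

Lemma step_oriented (T : finType) (A : {set T}) P (M : rel T) x v :
  RR A P M -> x \in A -> v \in A -> M x v -> ~~ M v x ->
  exists M', RR A P M' /\ asym A M' x \proper asym A M x.
Proof.
move=> H xA vA xv vx.
have [u uA [ux xu]] : exists2 u, u \in A & (M u x /\ ~~ M x u).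
  have : ~~ ([set w in A | M w x] \subset [set w in A | M x w]).
    apply/negP=> S.
    have Pr : [set w in A | M w x] \proper [set w in A | M x w].
      rewrite properE S /=; apply/subsetPn; exists v; by rewrite !inE ?vA ?xv ?vx.
    move: (proper_card Pr); case: H => [Hr Hc]; by rewrite Hc // Hr // ltnn.
  case/subsetPn=> u; rewrite !inE => /andP [uA ux] /negP nu.
  exists u => //; split => //; apply/negP => h; apply: nu; by rewrite uA.
case: (leqP (P v) (P u)) => Pvu; first exact: core H xA uA vA xv vx ux xu Pvu.
have [M1 [H1 Pr]] := core (RR_tr H) xA vA uA ux xu xv vx (ltnW Pvu).
exists (trr M1); split; first exact: RR_tr.
by rewrite asym_tr; rewrite asym_tr in Pr.
Qed.

Lemma step (T : finType) (A : {set T}) P (M : rel T) x w :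
  RR A P M -> x \in A -> w \in asym A M x ->
  exists M', RR A P M' /\ asym A M' x \proper asym A M x.
Proof.
move=> H xA; rewrite inE => /andP [wA ne].
case Mxw: (M x w).
  apply: (step_oriented H xA wA) => //; rewrite Mxw in ne; by case: (M w x) ne.
have Mwx : M w x by rewrite Mxw in ne; case: (M w x) ne.
have [M1 [H1 Pr]] := step_oriented (RR_tr H) xA wA (M := trr M) (x := x)
  (v := w) Mwx (negbT Mxw).
exists (trr M1); split; first exact: RR_tr.
by rewrite asym_tr; rewrite asym_tr in Pr.
Qed.

Lemma sym_at (T : finType) (A : {set T}) P x : x \in A -> forall n (M : rel T),
  #|asym A M x| <= n -> RR A P M ->
  exists M', RR A P M' /\ forall w, w \in A -> M' x w = M' w x.
Proof.
move=> xA; elim=> [|n IH] M hn H.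
  exists M; split => // w wA; case: (boolP (M x w == M w x)) => [/eqP //|ne]; exfalso.
  have : w \in asym A M x by rewrite inE wA ne.
  by rewrite leqn0 cards_eq0 in hn; rewrite (eqP hn) inE.
case: (set_0Vmem (asym A M x)) => [E|[w wi]].
  exists M; split => // w wA; case: (boolP (M x w == M w x)) => [/eqP //|ne]; exfalso.
  have : w \in asym A M x by rewrite inE wA ne.
  by rewrite E inE.
have [M1 [H1 Pr]] := step H xA wi.
apply: (IH M1) H1; move: (proper_card Pr) hn => a b; exact: leq_trans a b.
Qed.

Lemma sym_all (T : finType) : forall n (A : {set T}) P (M : rel T),
  #|A| <= n -> RR A P M ->
  exists e : rel T, (forall u v, e u v = e v u) /\
    forall u, u \in A -> #|[set v in A | e u v]| = P u.
Proof.
elim=> [|n IH] A P M hA H.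
  exists (fun _ _ => false); split => // u uA.
  by move: hA; rewrite leqn0 cards_eq0 => /eqP E; rewrite E inE in uA.
case: (set_0Vmem A) => [E|[x xA]].
  by exists (fun _ _ => false); split => // u; rewrite E inE.
have [M' [[Hr Hc] Sx]] := sym_at xA (leqnn _) H.
pose P' := fun u => P u - M' u x.
have HP : forall u, u \in A -> P u = M' u x + #|[set v in A :\ x | M' u v]|.
  by move=> u uA; rewrite -Hr // (card_split (fun v => M' u v) xA).
have HP2 : forall u, u \in A -> P u = M' u x + #|[set v in A :\ x | M' v u]|.
  move=> u uA; rewrite -Hc // (card_split (fun v => M' v u) xA) /=.
  by rewrite Sx.
have H' : RR (A :\ x) P' M'.
  split=> u; rewrite inE => /andP [_ uA].
    by rewrite /P' (HP u uA) addKn.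
  by rewrite /P' (HP2 u uA) addKn.
have hA' : #|A :\ x| <= n by move: hA; rewrite (cardsD1 x A) xA.
have [e' [Se' De']] := IH _ _ _ hA' H'.
pose e : rel T := fun a b => if a == x then M' x b else
  if b == x then M' x a else e' a b.
exists e; split.
  move=> a b; rewrite /e.
  case: (eqVneq a x) => [Ea|ax]; case: (eqVneq b x) => [Eb|bx];
    rewrite ?Ea ?Eb; by rewrite ?eqxx ?(negbTE ax) ?(negbTE bx) // Se'.
move=> u uA; case: (eqVneq u x) => [->|ux].
  rewrite -(Hr x xA); apply: eq_card => v; by rewrite !inE /e eqxx.
rewrite (card_split (fun v => e u v) xA) /= /e (negbTE ux) eqxx.
have -> : #|[set v in A :\ x | if v == x then M' x u else e' u v]| =
          #|[set v in A :\ x | e' u v]|.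
  apply: eq_card => v; rewrite !inE; by case: (v == x).
rewrite De'; last by rewrite !inE ux.
rewrite /P' Sx // (HP u uA) addKn; by rewrite -(HP u uA).
Qed.

Theorem theorem3 (P : seq nat) :
  (loop_graphic P <-> bigraphic P P) /\ (bigraphic P P <-> mirror_bigraphic P).
Proof.
have i_ii : loop_graphic P -> bigraphic P P.
  case=> e [Se De]; exists e; split=> u.
    by rewrite /deg1 -De.
  rewrite /deg2 -De /ldeg; apply: eq_card => w; by rewrite !inE Se.
have ii_i : bigraphic P P -> exists e : rel 'I_(size P),
   (forall u v, e u v = e v u) /\ forall u, ldeg e u = nth 0 P u.
  case=> b [D1 D2].
  have H : RR [set: 'I_(size P)] (fun i => nth 0 P i) b.
    split=> u _.
      rewrite -D1 /deg1; apply: eq_card => w; by rewrite !inE.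
    rewrite -D2 /deg2; apply: eq_card => w; by rewrite !inE.
  have [e [Se De]] := sym_all (leqnn _) H.
  exists e; split => // u; rewrite -De ?inE //.
  rewrite /ldeg; apply: eq_card => w; by rewrite !inE.
split; split => //.
- move=> Hb; split => //.
  have [e [Se De]] := ii_i Hb.
  exists e; split.
    split=> u; first by rewrite /deg1 -De.
    rewrite /deg2 -De /ldeg; apply: eq_card => w; by rewrite !inE Se.
  by exists id; split => //; exists id.
- by case.
Qed.
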